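(* Let $p,q$ be distinct primes and $n\geqslant1$. Then the width of $C_{p^nq}$ equals $n+1$.
   Context: For a finite group $G$, an arrow is a pair $(H,K)$ of subgroups with $H\leqslant K$; identity arrows are those with $H=K$. A $G$-transfer system is a set of arrows containing all identities and closed under composition ($(H,K),(K,L)\Rightarrow(H,L)$), conjugation ($(H,K)\Rightarrow(gHg^{-1},gKg^{-1})$) and restriction ($(H,K)$ and $L\leqslant K\Rightarrow(H\cap L,L)$). For a set $S$ of non-identity arrows, $\langle S\rangle$ is the smallest transfer system containing $S$. A minimal generating set of a transfer system $\mathsf{T}$ is a set $S\subseteq\mathsf{T}$ of non-identity arrows with $\langle S\rangle=\mathsf{T}$ and $\langle S\setminus\{s\}\rangle\neq\mathsf{T}$ for all $s\in S$; all such have the same cardinality $\mathfrak{m}(\mathsf{T})$. The width of $G$ is $\mathfrak{m}$ of the complete transfer system (consisting of all arrows). *)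

(* Defs.v *)
From mathcomp Require Import all_boot all_fingroup all_solvable.
Set Implicit Arguments. Unset Strict Implicit. Unset Printing Implicit Defensive.
Local Open Scope group_scope.

Section TransferSystems.
Variable gT : finGroupType.

Definition arrow_t := ({set gT} * {set gT})%type.

Definition arrowb (G : {set gT}) (a : arrow_t) : bool :=
  [&& group_set a.1, group_set a.2, a.1 \subset a.2 & a.2 \subset G].

Definition complete_ts (G : {set gT}) : {set arrow_t} := [set a | arrowb G a].

Definition is_transfer (G : {group gT}) (T : {set arrow_t}) : Prop :=
  [/\ (forall a, a \in T -> arrowb G a),
      (forall H : {group gT}, H \subset G -> ((H : {set gT}), (H : {set gT})) \in T),
      (forall H K L : {set gT}, (H, K) \in T -> (K, L) \in T -> (H, L) \in T),
      (forall (H K : {set gT}) g, g \in G -> (H, K) \in T -> (H :^ g, K :^ g) \in T)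
    & (forall (H K : {set gT}) (L : {group gT}),
          (H, K) \in T -> L \subset K -> (H :&: L, (L : {set gT})) \in T)].

Definition generates (G : {group gT}) (S T : {set arrow_t}) : Prop :=
  [/\ is_transfer G T, S \subset T &
      forall T', is_transfer G T' -> S \subset T' -> T \subset T'].

Definition min_gen_set (G : {group gT}) (S T : {set arrow_t}) : Prop :=
  [/\ S \subset T,
      (forall a, a \in S -> a.1 != a.2),
      generates G S T &
      forall s, s \in S -> ~ generates G (S :\ s) T].

End TransferSystems.

(* Main.v *)
Require Import Defs.
From mathcomp Require Import all_boot all_fingroup all_solvable.
From mathcomp Require Import zify.
From Stdlib Require Import Classical.
Set Implicit Arguments. Unset Strict Implicit. Unset Printing Implicit Defensive.
Section General.
Local Open Scope group_scope.
Variable gT : finGroupType.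
Implicit Types G H K L : {group gT}.

Definition restr (s : arrow_t gT) (a b : {set gT}) : bool :=
  (s.1 :&: b == a) && (b \subset s.2).

Definition coverP (G : {group gT}) (a b : {set gT}) : Prop :=
  [/\ group_set a, group_set b, a \proper b, b \subset G &
      forall m : {group gT}, a \subset m -> m \subset b -> (m :==: a) || (m :==: b)].

Definition covcond (G : {group gT}) (S : {set arrow_t gT}) : Prop :=
  forall a b, coverP G a b -> [exists s in S, restr s a b].

Lemma complete_transfer G : is_transfer G (complete_ts G).
Proof.
split.
- by move=> a; rewrite inE.
- by move=> H sHG; rewrite inE /arrowb /= groupP subxx sHG.
- move=> H K L; rewrite !inE /arrowb /= => /and4P[-> _ sHK sKG] /and4P[_ -> sKL sLG].
  by rewrite (subset_trans sHK sKL) sLG.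
- move=> H K g gG; rewrite !inE /arrowb /= !group_setJ conjSg => /and4P[-> -> -> sKG].
  by rewrite -(conjGid gG) conjSg sKG.
- move=> H K L; rewrite !inE /arrowb /= => /and4P[gH _ sHK sKG] sLK.
  move/isgroupP: gH => [H' ->].
  by rewrite group_setI groupP subsetIr (subset_trans sLK sKG).
Qed.

Lemma gen_of_cov G (S : {set arrow_t gT}) :
  S \subset complete_ts G -> covcond G S -> generates G S (complete_ts G).
Proof.
move=> sS cS; split; [exact: complete_transfer | exact: sS |].
move=> T' [_ Tid Tcomp _ Tres] sST'; apply/subsetP=> [[a b]].
rewrite inE /arrowb /= => /and4P[ga gb sab sbG].
case/isgroupP: ga => H ea; case/isgroupP: gb => K eb; subst a b.
move: {2}(#|K| - #|H|) (leqnn (#|K| - #|H|)) => k.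
elim: k H sab => [|k IH] H sHK hk.
  have eHK : H :=: K.
    apply/eqP; rewrite eqEcard sHK /=; by move: hk; rewrite leqn0 subn_eq0.
  by rewrite eHK; apply: Tid.
have [eHK | neHK] := eqVneq (H : {set gT}) K.
  by rewrite eHK; apply: Tid.
have pHK : H \proper K by rewrite properEneq neHK.
pose gP := fun M : {group gT} => H \proper M.
have [M minM sMK] := @mingroup_exists _ gP K pHK.
move/mingroupP: minM => [pHM minM].
have cHM : coverP G H M.
  split; [exact: groupP | exact: groupP | exact: pHM | exact: subset_trans sMK sbG |].
  move=> m sHm smM; have [eHm|neHm] := eqVneq (H : {set gT}) m; first by [].
  have pHm : gP m by rewrite /gP properEneq neHm.
  by rewrite (minM m pHm smM) eqxx.
have /existsP[[u v]] := cS _ _ cHM.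
rewrite /restr /= => /and3P[suS /eqP euM sMv].
have uvT : (u, v) \in T' by apply: (subsetP sST').
have HMT : ((H : {set gT}), (M : {set gT})) \in T'.
  by rewrite -euM; apply: Tres uvT sMv.
apply: Tcomp HMT _; apply: IH => //.
have := proper_card pHM; have := subset_leq_card sMK.
move: hk; clear; lia.
Qed.

Lemma abelian_conj_id (G : {group gT}) (X : {set gT}) g :
  abelian G -> g \in G -> X \subset G -> X :^ g = X.
Proof.
move=> abG gG sXG; apply/normP; apply: (subsetP (cent_sub X)).
exact: (subsetP (centS sXG)) _ (subsetP abG g gG).
Qed.

Lemma cov_of_gen G (S : {set arrow_t gT}) :
  abelian G -> generates G S (complete_ts G) -> covcond G S.
Proof.
move=> abG [_ sST minT] a b [ga gb pab sbG covab].
case/isgroupP: ga => A ea; case/isgroupP: gb => B eb; subst a b.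
apply: contraT => /existsPn nS.
have [cA cId cComp cConj cRes] := complete_transfer G.
have cId' H : H \subset G -> arrowb G (H : {set gT}, H : {set gT}).
  by move=> sHG; have := cId H sHG; rewrite inE.
have cComp' (H K L : {set gT}) : arrowb G (H,K) -> arrowb G (K,L) -> arrowb G (H,L).
  by move=> h1 h2; have := cComp H K L; rewrite !inE; apply.
have cRes' (H K : {set gT}) (L : {group gT}) : arrowb G (H,K) -> L \subset K -> arrowb G (H :&: L, L : {set gT}).
  by move=> h1 h2; have := cRes H K L; rewrite !inE; apply.
pose Tc := [set x in complete_ts G | ~~ restr x A B].
have tTc : is_transfer G Tc.
  split.
  - by move=> x; rewrite inE => /andP[]; rewrite inE.
  - move=> H sHG; rewrite !inE cId' //=; apply/andP => [[/eqP eHa sbH]].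
    by move: pab; rewrite -eHa (setIidPr sbH) properE subxx andbF.
  - move=> H K L; rewrite !inE => /andP[hHK rHK] /andP[hKL rKL].
    rewrite (cComp' _ _ _ hHK hKL) /=; apply/negP => /andP[/eqP eHa sBL].
    move: hHK; rewrite /arrowb /= => /and4P[_ gK sHK _].
    case/isgroupP: gK => K' eK; subst K.
    have sAKB : A \subset K' :&: B by rewrite -eHa setSI.
    case/orP: (covab (K' :&: B)%G sAKB (subsetIr _ _)) => /eqP e.
      by move: rKL; rewrite /restr /= e eqxx sBL.
    move: rHK; rewrite /restr /= eHa eqxx /=.
    by move/negP; apply; apply/setIidPr; exact: e.
  - move=> H K g gG; rewrite !inE => /andP[hHK rHK].
    have := hHK; rewrite /arrowb /= => /and4P[_ _ sHK sKG].
    rewrite (abelian_conj_id abG gG sKG).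
    by rewrite (abelian_conj_id abG gG (subset_trans sHK sKG)) -/(arrowb G (H, K)) hHK.
  - move=> H K L; rewrite !inE => /andP[hHK rHK] sLK.
    rewrite (cRes' _ _ _ hHK sLK) /=; apply/negP => /andP[/eqP eHa sBL].
    move: rHK; rewrite /restr /= -eHa -setIA (setIidPr sBL) eqxx /=.
    by rewrite (subset_trans sBL sLK).
have sSTc : S \subset Tc.
  apply/subsetP => s sS; rewrite inE (subsetP sST) //=.
  by have := nS s; rewrite sS.
have := subsetP (minT Tc tTc sSTc) (A : {set gT}, B : {set gT}).
rewrite !inE /arrowb /= !groupP (proper_sub pab) sbG /restr /=.
by rewrite (setIidPl (proper_sub pab)) eqxx subxx => /(_ isT).
Qed.


Lemma min_exists_aux G k : abelian G -> forall S : {set arrow_t gT},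
  #|S| <= k -> S \subset complete_ts G -> (forall a, a \in S -> a.1 != a.2) ->
  covcond G S -> exists S', min_gen_set G S' (complete_ts G).
Proof.
move=> abG; elim: k => [|k IH] S hk sS nS cS;
  (case: (classic (exists s, s \in S /\ generates G (S :\ s) (complete_ts G)))
     => [[s [sS' gs]] | hno]).
- by move: hk; rewrite (cardsD1 s S) sS'.
- by exists S; split=> // [|s sS' gs]; [exact: gen_of_cov | apply: hno; exists s].
- apply: (IH (S :\ s)).
  + by move: hk; rewrite (cardsD1 s S) sS' add1n ltnS.
  + exact: subset_trans (subsetDl _ _) sS.
  + by move=> a; rewrite inE => /andP[_]; apply: nS.
  + exact: cov_of_gen abG gs.
- by exists S; split=> // [|s sS' gs]; [exact: gen_of_cov | apply: hno; exists s].
Qed.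

Lemma min_exists G : abelian G -> exists S, min_gen_set G S (complete_ts G).
Proof.
move=> abG.
pose S0 := [set c in complete_ts G | c.1 != c.2].
apply: (@min_exists_aux G #|S0| abG S0 (leqnn _)).
- by apply/subsetP=> x; rewrite inE => /andP[].
- by move=> a; rewrite inE => /andP[].
- move=> a b [ga gb pab sbG _]; apply/existsP; exists (a, b).
  rewrite /restr /= (setIidPl (proper_sub pab)) eqxx subxx !inE /arrowb /=.
  by rewrite ga gb (proper_sub pab) sbG andbT; move: pab; rewrite properEneq => /andP[].
Qed.


End General.

Section Cyc.
Variable gT : finGroupType.

Lemma sub_exists (G : {group gT}) d : cyclic G -> d %| #|G| ->
  exists H : {group gT}, H \subset G /\ #|H| = d.
Proof.
case/cyclicP => x eG hd.
have hd' : d %| #[x]%g by rewrite orderE -eG.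
move/setP/(_ <[(x ^+ (#[x]%g %/ d))%g]>%G): (cycle_sub_group hd').
rewrite !inE eqxx => /andP[sH /eqP cH].
by exists <[(x ^+ (#[x]%g %/ d))%g]>%G; rewrite eG.
Qed.

Lemma prime_index_cover (G a b : {group gT}) r :
  a \subset b -> b \subset G -> prime r -> #|b| = #|a| * r -> coverP G a b.
Proof.
move=> sab sbG pr eb; split; rewrite ?groupP //.
  by rewrite properEcard sab eb ltn_Pmulr ?prime_gt1 ?cardG_gt0.
move=> m sam smb.
have d1 := cardSg sam; have d2 := cardSg smb.
have ek := divnK d1; set k := #|m| %/ #|a| in ek.
have : k %| r by rewrite -(dvdn_pmul2r (cardG_gt0 a)) ek mulnC -eb.
case/primeP: pr => _ h /h /orP[] /eqP ek'.
  by apply/orP; left; rewrite eq_sym eqEcard sam -ek ek' mul1n leqnn.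
by apply/orP; right; rewrite eqEcard smb eb -ek ek' mulnC leqnn.
Qed.

Lemma cover_prime_index (G : {group gT}) (a b : {set gT}) : cyclic G ->
  coverP G a b -> exists r, prime r /\ #|b| = #|a| * r.
Proof.
move=> cG [ga gb pab sbG cov].
case/isgroupP: ga => A ea; case/isgroupP: gb => B eb; subst a b.
have sAB := proper_sub pab.
have ek := divnK (cardSg sAB); set k := #|B| %/ #|A| in ek.
have k1 : 1 < k.
  move: (proper_card pab) (cardG_gt0 B); rewrite -ek.
  by case: (k) => [|[|k']] //=; rewrite ?mul0n ?mul1n ?ltnn.
have pr := pdiv_prime k1; set r := pdiv k in pr.
have hd : #|A| * r %| #|G|.
  apply: dvdn_trans (cardSg sbG); rewrite -ek mulnC dvdn_pmul2r ?cardG_gt0 //.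
  exact: pdiv_dvd.
have [M [sMG cM]] := sub_exists cG hd.
have sBG' := sbG; have sAG := subset_trans sAB sbG.
have sAM : A \subset M by rewrite -(cardSg_cyclic cG sAG sMG) cM dvdn_mulr.
have sMB : M \subset B.
  rewrite -(cardSg_cyclic cG sMG sbG) cM -ek mulnC dvdn_pmul2r ?cardG_gt0 //.
  exact: pdiv_dvd.
case/orP: (cov M sAM sMB) => /eqP e.
  move: cM; rewrite e => /eqP; rewrite -{1}[#|A|]muln1 eqn_mul2l.
  by case/orP => /eqP h; [move: (cardG_gt0 A); rewrite h | move: (prime_gt1 pr); rewrite -h].
by exists r; rewrite -e cM.
Qed.

End Cyc.

Lemma q_ndvd_pn p q n : prime p -> prime q -> p != q -> ~~ (q %| p ^ n).
Proof.
move=> pp pq npq; rewrite Euclid_dvdX // dvdn_prime2 // eq_sym.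
by rewrite (negbTE npq).
Qed.

Lemma arith_p p q n x : prime p -> prime q -> p != q -> x * p %| p ^ n * q ->
  exists i, [/\ i < n, x %| p ^ i * q, x * p %| p ^ i.+1 * q & ~~ (x * p %| p ^ i * q)].
Proof.
move=> pp pq npq hx.
have p0 := prime_gt0 pp; have q0 := prime_gt0 pq; have p1 := prime_gt1 pp.
have [qx | nqx] := boolP (q %| x).
  have ex := divnK qx; set t := x %/ q in ex.
  have htp : t * p %| p ^ n.
    by rewrite -(dvdn_pmul2r q0) -mulnA [p * q]mulnC mulnA ex.
  have /(dvdn_pfactor _ _ pp) [i lein ti] := dvdn_trans (dvdn_mulr p (dvdnn t)) htp.
  move: htp; rewrite ti -[p ^ i * p]expnSr dvdn_Pexp2l // => ltin.
  exists i; rewrite -ex ti mulnAC -[p ^ i * p]expnSr; split => //.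
  by rewrite dvdn_pmul2r // dvdn_Pexp2l // ltnn.
have cqx : coprime x q by rewrite coprime_sym prime_coprime.
have hx' : x %| p ^ n.
  by rewrite -(Gauss_dvdl _ cqx); exact: dvdn_trans (dvdn_mulr p (dvdnn x)) hx.
have [i lein ex] := dvdn_pfactor _ _ pp hx'; subst x.
have cpq : coprime (p ^ i.+1) q.
  by rewrite coprime_pexpl // prime_coprime // dvdn_prime2 //.
move: hx; rewrite -(expnSr p i) (Gauss_dvdl _ cpq) dvdn_Pexp2l // => ltin.
exists i; split => //; try by rewrite dvdn_mulr.
rewrite expnSr dvdn_pmul2l; last by rewrite expn_gt0 p0.
by rewrite dvdn_prime2.
Qed.

Unset Implicit Arguments.

Theorem lemma6p1 (gT : finGroupType) (G : {group gT}) (p q n : nat) :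
  prime p -> prime q -> p != q -> 0 < n ->
  cyclic G -> #|G| = p ^ n * q ->
  (exists S, min_gen_set G S (complete_ts G)) /\
  (forall S, min_gen_set G S (complete_ts G) -> #|S| = n.+1).
Proof.
move=> pp pq npq n0 cG oG.
have abG := cyclic_abelian cG.
split; first exact: min_exists abG.
move=> S [sST nS gS minS].
have cS := cov_of_gen abG gS.
have p0 := prime_gt0 pp; have q0 := prime_gt0 pq; have p1 := prime_gt1 pp.
pose sub d := odflt G [pick H : {group gT} | (H \subset G) && (#|H| == d)].
have subP d : d %| #|G| -> sub d \subset G /\ #|sub d| = d.
  move=> hd; rewrite /sub; case: pickP => [H /andP[sH /eqP cH] | none] //=.
  have [H [sH cH]] := sub_exists cG hd.
  by move: (none H); rewrite sH cH eqxx.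
pose A i := sub (p ^ i * q). pose B i := sub (p ^ i.+1 * q). pose P := sub (p ^ n).
have hA i : i <= n -> A i \subset G /\ #|A i| = p ^ i * q.
  by move=> lin; apply: subP; rewrite oG dvdn_pmul2r // dvdn_Pexp2l.
have hB i : i < n -> B i \subset G /\ #|B i| = p ^ i.+1 * q.
  by move=> lin; apply: subP; rewrite oG dvdn_pmul2r // dvdn_Pexp2l.
have hP : P \subset G /\ #|P| = p ^ n by apply: subP; rewrite oG dvdn_mulr.
pose c i : arrow_t gT := if i < n then ((A i : {set gT}), (B i : {set gT}))
                         else ((P : {set gT}), (G : {set gT})).
have cov_c i : i <= n -> coverP G (c i).1 (c i).2.
  rewrite /c; case: ltnP => [lin | _] _ /=.
    have [sAG cA] := hA i (ltnW lin); have [sBG cB] := hB i lin.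
    apply: (prime_index_cover (r:=p)) => //.
      by rewrite -(cardSg_cyclic cG sAG sBG) cA cB dvdn_pmul2r // dvdn_Pexp2l.
    by rewrite cA cB expnSr mulnAC.
  by apply: (prime_index_cover (r:=q)) => //; rewrite ?hP.2 // hP.1.
pose f i := odflt ((P : {set gT}), (G : {set gT})) [pick s in S | restr s (c i).1 (c i).2].
have hf i : i <= n -> f i \in S /\ restr (f i) (c i).1 (c i).2.
  move=> lin; rewrite /f; case: pickP => [s /andP[sS rs] | none] //=.
  have /existsP[s /andP[sS rs]] := cS _ _ (cov_c i lin).
  by move: (none s); rewrite sS rs.
have fS i : i <= n -> (f i).1 \subset G.
  move=> lin; have := subsetP sST _ (hf i lin).1; rewrite inE /arrowb.
  by case/and4P=> _ _ h1 h2; exact: subset_trans h1 h2.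
have fn1 : (f n).1 = P.
  have [_ /andP[/eqP e _]] := hf n (leqnn n); rewrite /c ltnn /= in e.
  by rewrite -e; apply/esym/setIidPl; apply: fS.
have fn2 : (G : {set gT}) \subset (f n).2.
  by have [_ /andP[_ e]] := hf n (leqnn n); rewrite /c ltnn /= in e.
have fi i : i < n -> ((f i).1 :&: B i = A i) /\ (B i : {set gT}) \subset (f i).2.
  move=> lin; have [_ /andP[/eqP e1 e2]] := hf i (ltnW lin).
  by rewrite /c lin /= in e1 e2.
have fiA i : i < n -> (A i : {set gT}) \subset (f i).1.
  by move=> lin; rewrite -(fi i lin).1 subsetIl.
have finj i j : i <= n -> j <= n -> f i = f j -> i = j.
  wlog lij : i j / i <= j.
    move=> hw lin ljn e; case/orP: (leq_total i j) => h; first exact: hw.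
    by apply/esym; apply: hw.
  move=> lin ljn e; have [//|nij] := eqVneq i j.
  have ltij : i < j by rewrite ltn_neqAle nij.
  have lti : i < n := leq_trans ltij ljn.
  case: (ltnP j n) => [ltj | lej].
    have [sBG cB] := hB i lti; have [sAG cA] := hA j (ltnW ltj).
    have sBA : B i \subset A j.
      by rewrite -(cardSg_cyclic cG sBG sAG) cB cA dvdn_pmul2r // dvdn_Pexp2l.
    have sBf : (B i : {set gT}) \subset (f i).1.
      by rewrite e; apply: subset_trans sBA (fiA j ltj).
    have := (fi i lti).1; rewrite (setIidPr sBf) => eBA.
    have := (hA i (ltnW lti)).2; rewrite -eBA cB => /eqP.
    by rewrite eqn_pmul2r // eqn_exp2l // (gtn_eqF (ltnSn i)).
  have ejn : j = n by apply/eqP; rewrite eqn_leq ljn lej.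
  subst j; move: (fiA i lti); rewrite e fn1.
  have [sAG cA] := hA i (ltnW lti).
  rewrite -(cardSg_cyclic cG sAG hP.1) cA hP.2 => h.
  by move: (q_ndvd_pn n pp pq npq); rewrite (dvdn_trans (dvdn_mull _ (dvdnn q)) h).
pose S' := [set f (nat_of_ord i) | i in [set: 'I_n.+1]].
have S'S : S' \subset S.
  by apply/subsetP => _ /imsetP[i _ ->]; apply: (hf i (ltn_ord i)).1.
have cS' : covcond G S'.
  move=> a b cab; have [r [pr eb]] := cover_prime_index cG cab.
  case: cab => ga gb pab sbG cov.
  case/isgroupP: ga => a' ea; case/isgroupP: gb => b' eb'; subst a b.
  have sab := proper_sub pab; have saG := subset_trans sab sbG.
  have hd : #|a'| * r %| p ^ n * q by rewrite -eb -oG cardSg.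
  have : r %| p ^ n * q := dvdn_trans (dvdn_mull _ (dvdnn r)) hd.
  rewrite Euclid_dvdM // Euclid_dvdX // !dvdn_prime2 // => /orP[/andP[/eqP er _]|/eqP er]; subst r.
    have [i [lin d1 d2 d3]] := arith_p pp pq npq hd.
    have [sAG cA] := hA i (ltnW lin); have [sBG cB] := hB i lin.
    have saA : a' \subset A i by rewrite -(cardSg_cyclic cG saG sAG) cA.
    have sbB : b' \subset B i by rewrite -(cardSg_cyclic cG sbG sBG) cB eb.
    have nbA : ~~ (b' \subset A i).
      by apply: contra d3 => h; rewrite -eb -cA; apply: cardSg.
    apply/existsP; exists (f i); rewrite /restr.
    have -> : f i \in S' by apply/imsetP; exists (Ordinal (ltnW lin : i < n.+1)).
    rewrite (subset_trans sbB (fi i lin).2) andbT /=.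
    have -> : (f i).1 :&: b' = A i :&: b'.
      by rewrite -(fi i lin).1 -setIA (setIidPr sbB).
    have h : a' \subset (A i :&: b')%G by rewrite subsetI saA sab.
    case/orP: (cov (A i :&: b')%G h (subsetIr _ _)) => //.
    by move/eqP => e; move: nbA; rewrite -e subsetIl.
  apply/existsP; exists (f n); rewrite /restr.
  have -> : f n \in S' by apply/imsetP; exists (@ord_max n).
  rewrite (subset_trans sbG fn2) andbT /= fn1.
  have saP : a' \subset P.
    rewrite -(cardSg_cyclic cG saG hP.1) hP.2 -(dvdn_pmul2r q0) -oG -eb.
    exact: cardSg.
  have h : a' \subset (P :&: b')%G by rewrite subsetI saP sab.
  case/orP: (cov (P :&: b')%G h (subsetIr _ _)) => //.
  move/eqP => e; have sbP : b' \subset P by rewrite -e subsetIl.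
  move: (cardSg sbP); rewrite hP.2 eb => h2.
  by move: (q_ndvd_pn n pp pq npq); rewrite (dvdn_trans (dvdn_mull _ (dvdnn q)) h2).
have SS' : S \subset S'.
  apply/subsetP => s sS; apply: contraT => nsS'; exfalso.
  apply: (minS s sS); apply: gen_of_cov.
    exact: subset_trans (subsetDl _ _) sST.
  move=> a b cab; have /existsP[t /andP[tS' rt]] := cS' a b cab.
  apply/existsP; exists t; rewrite rt andbT in_setD1 (subsetP S'S t tS') andbT.
  by apply: contraNneq nsS' => <-.
have -> : S = S' by apply/eqP; rewrite eqEsubset SS' S'S.
rewrite card_imset ?cardsT ?card_ord //.
move=> i j e; apply: val_inj; apply: finj e; by rewrite -ltnS ltn_ord.
Qed.
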